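(* Fix constants $0<C_1\le C_2$, an integer $K\ge1$, and constants $C,\delta>0$. Let $G=(V,E)$ be a proper graph on $n$ vertices and $N=(G,c)$ an electrical network with $C_1\le c_{ij}\le C_2$ for all $(i,j)\in E$. Let $\Gamma=\{x_1,\dots,x_K\}\subset V$ be distinct boundary vertices with boundary potentials $V_{x_k}=p_{x_k}$, $0\le p_{x_k}\le 1$, $k=1,\dots,K$. Then the potential distribution satisfies \[ V_i=\frac{\sum_{k=1}^K p_{x_k}c_{x_k}}{\sum_{k=1}^K c_{x_k}}+O\big((\ln n)^{-1}\big)\qquad\text{for each } i\in V\setminus\Gamma, \] where the implied constant depends only on $C_1,C_2,K,C,\delta$.
   Context: An electrical network $N=(G,c)$ on a simple graph $G=(V,E)$ assigns a conductance $c_{ij}=c_{ji}>0$ to each edge $(i,j)\in E$; write $c_i=\sum_{j:(i,j)\in E}c_{ij}$. Given a boundary set $\Gamma\subset V$ with prescribed values on $\Gamma$, the potential distribution is the function $V:V\to\mathbb{R}$ taking the prescribed values on $\Gamma$ and satisfying $\sum_{j:(i,j)\in E}c_{ij}(V_i-V_j)=0$ (i.e. $V_i=\sum_{j:(i,j)\in E}\frac{c_{ij}}{c_i}V_j$) for every $i\in V\setminus\Gamma$. Let $G=(V,E)$ be a simple graph on $n$ vertices and let $0<C_1\le C_2$, $K\ge 1$, $C>0$, $\delta>0$ be constants. $G$ is called proper if: (P1) $G$ is connected. (P2) Calling a cycle short if its length is at most $\frac{\ln n}{10\ln\ln n}$, any two distinct short cycles are at distance at least $\frac{\ln n}{\ln\ln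 n}$. (P3) $G$ contains at least one cycle of length 3, one of length 5, and one of length 7. (P4) For every conductance assignment $c$ on $E$ with $C_1\le c_{ij}\le C_2$ for all $(i,j)\in E$, every $L\subset V$ with $|L|\le K$, and every nonempty $S\subset V\setminus L$ with $|S|\le n/2$, writing $G'=G[V\setminus L]=(V',E')$, $\bar S=V\setminus(L\cup S)$, $E_{G'}(S,\bar S)$ for the set of edges of $G'$ with one end in $S$ and the other in $\bar S$, and $c'_i=\sum_{j:(i,j)\in E'}c_{ij}$, one has $\dfrac{\sum_{(i,j)\in E_{G'}(S,\bar S)}c_{ij}}{\sum_{i\in S}c'_i}\ge \dfrac{C_1}{6C_2}$. (P5) Every vertex $i\in V$ has degree $d(i)$ satisfying $\delta C\ln n< d(i)<4C\ln n$. Asymptotic notation refers to $n\to\infty$. *)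

(* Defs.v *)
From Stdlib Require Import Reals List Arith Bool.
Import ListNotations.
Open Scope R_scope.

Definition simple_graph (n : nat) (adj : nat -> nat -> bool) : Prop :=
  (forall i j, adj i j = adj j i) /\
  (forall i, adj i i = false) /\
  (forall i j, adj i j = true -> (i < n)%nat /\ (j < n)%nat).

Definition sumV (n : nat) (f : nat -> R) : R :=
  fold_right Rplus 0 (map f (seq 0 n)).

Definition card (n : nat) (P : nat -> bool) : nat :=
  length (filter P (seq 0 n)).

Definition degree (n : nat) (adj : nat -> nat -> bool) (i : nat) : nat :=
  card n (adj i).

Definition conductance (adj : nat -> nat -> bool) (C1 C2 : R) (c : nat -> nat -> R) : Prop :=
  (forall i j, c i j = c j i) /\
  (forall i j, adj i j = true -> C1 <= c i j <= C2).

(* c_i = sum of conductances of edges at i. *)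
Definition ctot (n : nat) (adj : nat -> nat -> bool) (c : nat -> nat -> R) (i : nat) : R :=
  sumV n (fun j => if adj i j then c i j else 0).

Fixpoint chain (adj : nat -> nat -> bool) (l : list nat) : Prop :=
  match l with
  | a :: ((b :: _) as t) => adj a b = true /\ chain adj t
  | _ => True
  end.

Definition walk (adj : nat -> nat -> bool) (u v : nat) (k : nat) (w : list nat) : Prop :=
  chain adj w /\ hd_error w = Some u /\ last w u = v /\ length w = S k.

Definition connected (n : nat) (adj : nat -> nat -> bool) : Prop :=
  forall u v, (u < n)%nat -> (v < n)%nat -> exists k w, walk adj u v k w.

Definition is_cycle (adj : nat -> nat -> bool) (l : list nat) : Prop :=
  (3 <= length l)%nat /\ NoDup l /\ chain adj l /\ adj (last l 0%nat) (hd 0%nat l) = true.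

Definition cyc_pairs (l : list nat) : list (nat * nat) :=
  combine l (tl l ++ [hd 0%nat l]).

Definition cyc_edge (l : list nat) (u v : nat) : Prop :=
  In (u, v) (cyc_pairs l) \/ In (v, u) (cyc_pairs l).

Definition distinct_cycles (l1 l2 : list nat) : Prop :=
  exists u v, ~ (cyc_edge l1 u v <-> cyc_edge l2 u v).

Definition cycles_far (adj : nat -> nat -> bool) (l1 l2 : list nat) (D : R) : Prop :=
  forall u w k p, In u l1 -> In w l2 -> walk adj u w k p -> D <= INR k.

Definition short_cycle (n : nat) (adj : nat -> nat -> bool) (l : list nat) : Prop :=
  is_cycle adj l /\ INR (length l) <= ln (INR n) / (10 * ln (ln (INR n))).

Definition P4 (n : nat) (adj : nat -> nat -> bool) (C1 C2 : R) (K : nat) : Prop :=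
  forall (c : nat -> nat -> R) (L S : nat -> bool),
    conductance adj C1 C2 c ->
    (forall i, L i = true -> (i < n)%nat) ->
    (card n L <= K)%nat ->
    (forall i, S i = true -> (i < n)%nat /\ L i = false) ->
    (exists i, S i = true) ->
    INR (card n S) <= INR n / 2 ->
    let Sbar := fun j => Nat.ltb j n && negb (L j) && negb (S j) in
    let cut := sumV n (fun i => if S i then
                 sumV n (fun j => if adj i j && Sbar j then c i j else 0) else 0) in
    let vol := sumV n (fun i => if S i then
                 sumV n (fun j => if adj i j && negb (L j) then c i j else 0) else 0) in
    cut / vol >= C1 / (6 * C2).

Definition proper (n : nat) (adj : nat -> nat -> bool)
    (C1 C2 : R) (K : nat) (C delta : R) : Prop :=
  simple_graph n adj /\
  connected n adj /\
  (forall l1 l2, short_cycle n adj l1 -> short_cycle n adj l2 ->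
              distinct_cycles l1 l2 -> cycles_far adj l1 l2 (ln (INR n) / ln (ln (INR n)))) /\
  (exists l3 l5 l7, is_cycle adj l3 /\ length l3 = 3%nat /\
              is_cycle adj l5 /\ length l5 = 5%nat /\
              is_cycle adj l7 /\ length l7 = 7%nat) /\
  P4 n adj C1 C2 K /\
  (forall i, (i < n)%nat ->
              delta * C * ln (INR n) < INR (degree n adj i) < 4 * C * ln (INR n)).

Definition harmonic_off (n : nat) (adj : nat -> nat -> bool) (c : nat -> nat -> R)
    (inGamma : nat -> Prop) (V : nat -> R) : Prop :=
  forall i, (i < n)%nat -> ~ inGamma i ->
    sumV n (fun j => if adj i j then c i j * (V i - V j) else 0) = 0.

Definition sumK (K : nat) (f : nat -> R) : R := fold_right Rplus 0 (map f (seq 0 K)).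

(* Main.v *)
Require Import Defs.
From Stdlib Require Import Reals List Arith.
From Stdlib Require Import Lra Lia Psatz Classical Bool.
Import ListNotations.
Open Scope R_scope.

Lemma fr_plus_acc (l : list R) a : fold_right Rplus a l = fold_right Rplus 0 l + a.
Proof. induction l; simpl; [lra| rewrite IHl; lra]. Qed.

Lemma sumV_0 f : sumV 0 f = 0.
Proof. reflexivity. Qed.

Lemma sumV_S n f : sumV (S n) f = sumV n f + f n.
Proof. unfold sumV. rewrite seq_S, map_app, fold_right_app. simpl.
  rewrite fr_plus_acc. lra. Qed.

Lemma sumV_ext n f g : (forall i, (i < n)%nat -> f i = g i) -> sumV n f = sumV n g.
Proof. induction n; intros H; [reflexivity|]. rewrite !sumV_S, IHn, H; auto. Qed.

Lemma sumV_le n f g : (forall i, (i < n)%nat -> f i <= g i) -> sumV n f <= sumV n g.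
Proof. induction n; intros H; [rewrite !sumV_0; lra|]. rewrite !sumV_S.
  assert (f n <= g n) by (apply H; lia). assert (sumV n f <= sumV n g) by (apply IHn; intros; apply H; lia). lra. Qed.

Lemma sumV_plus n f g : sumV n (fun i => f i + g i) = sumV n f + sumV n g.
Proof. induction n; [rewrite !sumV_0; lra|]. rewrite !sumV_S, IHn. lra. Qed.

Lemma sumV_minus n f g : sumV n (fun i => f i - g i) = sumV n f - sumV n g.
Proof. induction n; [rewrite !sumV_0; lra|]. rewrite !sumV_S, IHn. lra. Qed.

Lemma sumV_scal n r f : sumV n (fun i => r * f i) = r * sumV n f.
Proof. induction n; [rewrite !sumV_0; lra|]. rewrite !sumV_S, IHn. lra. Qed.

Lemma sumV_const n r : sumV n (fun _ => r) = INR n * r.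
Proof. induction n; [rewrite sumV_0; simpl; lra|]. rewrite sumV_S, IHn, S_INR. lra. Qed.

Lemma sumV_nonneg n f : (forall i, (i < n)%nat -> 0 <= f i) -> 0 <= sumV n f.
Proof. intros H. replace 0 with (sumV n (fun _ => 0)) at 1.
  - apply sumV_le; auto.
  - rewrite sumV_const; lra. Qed.

Lemma sumV_ge_term n f a : (forall i, (i < n)%nat -> 0 <= f i) -> (a < n)%nat -> f a <= sumV n f.
Proof. induction n; intros H Ha; [lia|]. rewrite sumV_S.
  destruct (Nat.eq_dec a n) as [->|Hne].
  - assert (0 <= sumV n f) by (apply sumV_nonneg; intros; apply H; lia). lra.
  - assert (f a <= sumV n f) by (apply IHn; [intros; apply H; lia| lia]).
    assert (0 <= f n) by (apply H; lia). lra. Qed.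

Lemma sumV_abs n f : Rabs (sumV n f) <= sumV n (fun i => Rabs (f i)).
Proof. induction n; [rewrite !sumV_0, Rabs_R0; lra|]. rewrite !sumV_S.
  eapply Rle_trans; [apply Rabs_triang|]. lra. Qed.

Lemma sumV_swap n m F : sumV n (fun i => sumV m (fun j => F i j)) = sumV m (fun j => sumV n (fun i => F i j)).
Proof. induction n.
  - rewrite sumV_0. transitivity (sumV m (fun _ => 0)); [rewrite sumV_const; lra|]. apply sumV_ext; intros; rewrite sumV_0; reflexivity.
  - rewrite sumV_S, IHn. rewrite <- sumV_plus. apply sumV_ext; intros; rewrite sumV_S; reflexivity. Qed.

Lemma sumV_ind n a (X : R) : (a < n)%nat -> sumV n (fun i => if Nat.eqb i a then X else 0) = X.
Proof. induction n; intros Ha; [lia|]. rewrite sumV_S.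
  destruct (Nat.eq_dec a n) as [->|Hne].
  - rewrite Nat.eqb_refl. rewrite (sumV_ext n _ (fun _ => 0)).
    + rewrite sumV_const. lra.
    + intros i Hi. destruct (Nat.eqb_spec i n); [lia|auto].
  - rewrite IHn by lia. destruct (Nat.eqb_spec n a); [lia|lra]. Qed.

Lemma card_sum n P : INR (card n P) = sumV n (fun i => if P i then 1 else 0).
Proof. unfold card. induction n; [reflexivity|].
  rewrite seq_S, filter_app, length_app, plus_INR, IHn, sumV_S. simpl.
  destruct (P n); simpl; lra. Qed.

Lemma exists_argmin n (P : nat -> bool) (f : nat -> R) :
  (exists i, (i < n)%nat /\ P i = true) ->
  exists i0, (i0 < n)%nat /\ P i0 = true /\ forall j, (j < n)%nat -> P j = true -> f i0 <= f j.
Proof. induction n; intros [i [Hi HP]]; [lia|].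
  destruct (classic (exists i, (i < n)%nat /\ P i = true)) as [Ex|NEx].
  - destruct (IHn Ex) as [i0 [H1 [H2 H3]]].
    destruct (P n) eqn:Pn.
    + destruct (Rle_dec (f i0) (f n)).
      * exists i0. split; [lia|split; auto]. intros j Hj Pj.
        destruct (Nat.eq_dec j n) as [->|]; [auto| apply H3; auto; lia].
      * exists n. split; [lia|split; auto]. intros j Hj Pj.
        destruct (Nat.eq_dec j n) as [->|]; [lra|]. assert (f i0 <= f j) by (apply H3; auto; lia). lra.
    + exists i0. split; [lia|split; auto]. intros j Hj Pj.
      destruct (Nat.eq_dec j n) as [->|]; [congruence| apply H3; auto; lia].
  - assert (i = n). { destruct (Nat.eq_dec i n); auto. exfalso; apply NEx; exists i; split; auto; lia. }
    subst. exists n. split; [lia|split; auto]. intros j Hj Pj.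
    destruct (Nat.eq_dec j n) as [->|]; [lra|]. exfalso; apply NEx; exists j; split; auto; lia. Qed.

Ltac fixneg := repeat match goal with
  | H : ~ (_ <= _) |- _ => apply Rnot_le_lt in H
  | H : ~ (_ < _) |- _ => apply Rnot_lt_le in H end.
Ltac nra' := fixneg; simpl; nra.

Lemma last_indep (b : nat) t d1 d2 : last (b :: t) d1 = last (b :: t) d2.
Proof. revert b. induction t; intros b; [reflexivity|]. simpl. apply (IHt a). Qed.

Lemma walk_const (adj : nat -> nat -> bool) (Pr : nat -> Prop) :
  (forall u v, Pr u -> adj u v = true -> Pr v) ->
  forall w u, chain adj w -> hd_error w = Some u -> Pr u -> Pr (last w u).
Proof. intros Hs w. induction w as [|a t IH]; intros u Hc Hh Hu; [discriminate|].
  simpl in Hh. injection Hh as ->. destruct t as [|b t'].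
  - simpl. auto.
  - simpl in Hc. destruct Hc as [Hab Hc].
    change (last (u :: b :: t') u) with (last (b :: t') u).
    rewrite (last_indep b t' u b). apply IH; auto. eapply Hs; eauto. Qed.

Lemma maxprin n (adj : nat -> nat -> bool) (c : nat -> nat -> R) (Gam : nat -> bool) (V : nat -> R) B g :
  simple_graph n adj -> connected n adj -> (forall i j, adj i j = true -> 0 < c i j) ->
  (g < n)%nat -> Gam g = true ->
  (forall i, (i < n)%nat -> Gam i = true -> V i <= B) ->
  (forall i, (i < n)%nat -> Gam i = false -> sumV n (fun j => if adj i j then c i j * (V i - V j) else 0) = 0) ->
  forall i, (i < n)%nat -> V i <= B.
Proof. intros [Hsym [Hirr Hlt]] Hcon Hc Hg HGg HB Hh i Hi.
  destruct (exists_argmin n (fun _ => true) (fun i => - V i)) as [i1 [Hi1 [_ Hmax]]].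
  { exists g; auto. }
  assert (Vi : V i <= V i1) by (specialize (Hmax i Hi eq_refl); lra).
  destruct (Rle_dec (V i1) B) as [|Hgt]; [lra|]. exfalso.
  set (Pr := fun u => (u < n)%nat /\ V u = V i1).
  assert (Hs : forall u v, Pr u -> adj u v = true -> Pr v).
  { intros u v [Hu HVu] Hadj. assert (Hv : (v < n)%nat) by (apply (Hlt u v Hadj)).
    split; auto.
    assert (Gu : Gam u = false).
    { destruct (Gam u) eqn:E; auto. specialize (HB u Hu E). lra. }
    specialize (Hh u Hu Gu).
    destruct (Rle_dec (V i1) (V v)) as [Hle|Hlt'].
    { specialize (Hmax v Hv eq_refl). lra. }
    exfalso.
    assert (Hpos : 0 < (if adj u v then c u v * (V u - V v) else 0)).
    { rewrite Hadj. apply Rmult_lt_0_compat; [apply Hc; auto| lra]. }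
    assert (Hle : (if adj u v then c u v * (V u - V v) else 0) <= sumV n (fun j => if adj u j then c u j * (V u - V j) else 0)).
    { apply (sumV_ge_term n (fun j => if adj u j then c u j * (V u - V j) else 0) v); auto.
      intros j Hj. destruct (adj u j) eqn:E; [|lra]. apply Rmult_le_pos; [left; apply Hc; auto|].
      specialize (Hmax j Hj eq_refl). lra. }
    lra. }
  destruct (Hcon i1 g Hi1 Hg) as [k [w [Hc1 [Hh1 [Hl1 _]]]]].
  assert (Pr (last w i1)) by (apply (walk_const adj Pr Hs w i1); auto; split; auto).
  rewrite Hl1 in H. destruct H as [_ HV]. specialize (HB g Hg HGg). lra. Qed.

Definition posr (r : R) := Rmax 0 r.
Definition isp (r : R) : bool := if Rlt_dec 0 r then true else false.
Definition inG (n : nat) (L : nat -> bool) (i : nat) : bool := Nat.ltb i n && negb (L i).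
Definition cutf n (adj : nat -> nat -> bool) (c : nat -> nat -> R) (L S : nat -> bool) :=
  sumV n (fun i => if S i then
     sumV n (fun j => if adj i j && (Nat.ltb j n && negb (L j) && negb (S j)) then c i j else 0) else 0).
Definition volf n (adj : nat -> nat -> bool) (c : nat -> nat -> R) (L S : nat -> bool) :=
  sumV n (fun i => if S i then
     sumV n (fun j => if adj i j && negb (L j) then c i j else 0) else 0).
Definition Dd n (adj : nat -> nat -> bool) (c : nat -> nat -> R) (L : nat -> bool) (F : nat -> R) :=
  sumV n (fun i => if inG n L i then
     sumV n (fun j => if adj i j && inG n L j then c i j * posr (F i - F j) else 0) else 0).
Definition Wd n (adj : nat -> nat -> bool) (c : nat -> nat -> R) (L : nat -> bool) i :=
  sumV n (fun j => if adj i j && negb (L j) then c i j else 0).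
Definition Xf n (adj : nat -> nat -> bool) (c : nat -> nat -> R) (L : nat -> bool) (F : nat -> R) :=
  sumV n (fun i => if inG n L i then F i * Wd n adj c L i else 0).

Lemma isp_true r : isp r = true <-> 0 < r.
Proof. unfold isp. destruct (Rlt_dec 0 r); split; intros; auto; discriminate. Qed.
Lemma isp_false r : isp r = false <-> ~ 0 < r.
Proof. unfold isp. destruct (Rlt_dec 0 r); split; intros; auto; try discriminate; contradiction. Qed.

Lemma posr_nonneg r : 0 <= posr r.
Proof. unfold posr, Rmax. destruct (Rle_dec 0 r); lra. Qed.

Lemma posr_neg r : r <= 0 -> posr r = 0.
Proof. intros; unfold posr, Rmax; destruct (Rle_dec 0 r); lra. Qed.
Lemma posr_pos r : 0 <= r -> posr r = r.
Proof. intros; unfold posr, Rmax; destruct (Rle_dec 0 r); lra. Qed.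

Lemma Dd_nonneg n adj c L F : (forall i j, adj i j = true -> 0 <= c i j) -> 0 <= Dd n adj c L F.
Proof. intros Hc. unfold Dd. apply sumV_nonneg. intros i Hi. destruct (inG n L i); [|lra].
  apply sumV_nonneg. intros j Hj. destruct (adj i j) eqn:E; simpl; [|lra].
  destruct (inG n L j); [|lra]. apply Rmult_le_pos; [auto|apply posr_nonneg]. Qed.

Lemma card_none n P : (forall i, (i < n)%nat -> P i = false) -> card n P = 0%nat.
Proof. intros H. apply INR_eq. rewrite card_sum. simpl.
  transitivity (sumV n (fun _ => 0)); [|rewrite sumV_const; lra].
  apply sumV_ext. intros i Hi. rewrite H; auto. Qed.

Lemma card_pos n P i : (i < n)%nat -> P i = true -> 1 <= INR (card n P).
Proof. intros Hi HP. rewrite card_sum.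
  assert (H := sumV_ge_term n (fun i => if P i then 1 else 0) i). simpl in H. rewrite HP in H.
  apply H; auto. intros j _. destruct (P j); lra. Qed.

Lemma coarea n adj c L h :
  (forall i j, adj i j = true -> (j < n)%nat) ->
  (forall i j, adj i j = true -> 0 <= c i j) ->
  (forall S : nat -> bool, (forall i, S i = true -> (i < n)%nat /\ L i = false) ->
       INR (card n S) <= INR n / 2 -> h * volf n adj c L S <= cutf n adj c L S) ->
  forall N F, (forall i, 0 <= F i) -> (forall i, 0 < F i -> inG n L i = true) ->
  (card n (fun i => isp (F i)) <= N)%nat -> INR (card n (fun i => isp (F i))) <= INR n / 2 ->
  h * Xf n adj c L F <= Dd n adj c L F.
Proof. intros Hlt Hc HP N. induction N as [|N IH]; intros F HF0 HFG HN Hhalf.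
  -
    assert (Hz : forall i, (i < n)%nat -> F i = 0).
    { intros i Hi. destruct (Rlt_dec 0 (F i)) as [Hp|Hp]; [|specialize (HF0 i); lra].
      assert (1 <= INR (card n (fun i => isp (F i)))) by (apply (card_pos n _ i); auto; apply isp_true; auto).
      assert (card n (fun i => isp (F i)) = 0%nat) by lia. rewrite H0 in H. simpl in H. lra. }
    assert (Xf n adj c L F = 0).
    { unfold Xf. transitivity (sumV n (fun _ => 0)); [|rewrite sumV_const; lra].
      apply sumV_ext. intros i Hi. rewrite Hz by auto. destruct (inG n L i); lra. }
    rewrite H. rewrite Rmult_0_r. apply Dd_nonneg; auto.
  - destruct (classic (exists i, (i < n)%nat /\ isp (F i) = true)) as [Ex|NEx].
    2:{ apply IH; auto. rewrite card_none; [lia|]. intros i Hi. destruct (isp (F i)) eqn:E; auto.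
        exfalso; apply NEx; eauto. }
    destruct (exists_argmin n (fun i => isp (F i)) F Ex) as [i0 [Hi0 [Hp0 Hmin]]].
    set (t := F i0). assert (Ht : 0 < t) by (apply isp_true; auto).
    set (S := fun i => isp (F i)).
    set (F' := fun i => if S i then F i - t else 0).
    assert (HSn : forall i, S i = true -> (i < n)%nat /\ L i = false).
    { intros i Hi. apply isp_true in Hi. apply HFG in Hi. unfold inG in Hi.
      apply andb_prop in Hi as [H1 H2]. apply Nat.ltb_lt in H1. split; auto. destruct (L i); auto; discriminate. }
    assert (HSge : forall i, S i = true -> t <= F i).
    { intros i Hi. apply Hmin; auto. apply HSn; auto. }
    assert (HSf : forall i, S i = false -> F i = 0).
    { intros i Hi. apply isp_false in Hi. specialize (HF0 i). lra. }
    assert (HF'0 : forall i, 0 <= F' i).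
    { intros i. unfold F'. destruct (S i) eqn:E; [specialize (HSge i E); lra| lra]. }
    assert (HF'S : forall i, 0 < F' i -> S i = true /\ t < F i).
    { intros i. unfold F'. destruct (S i) eqn:E; intros; [split; auto; lra| lra]. }
    assert (Hcard : INR (card n (fun i => isp (F' i))) + 1 <= INR (card n S)).
    { assert (Hone := sumV_ind n i0 1 Hi0).
      assert (Hs : sumV n (fun i => (if isp (F' i) then 1 else 0) + (if Nat.eqb i i0 then 1 else 0))
                  <= sumV n (fun i => if S i then 1 else 0)).
      { apply sumV_le. intros i Hi. destruct (isp (F' i)) eqn:E1.
        - apply isp_true in E1. destruct (HF'S i E1) as [E2 E3]. rewrite E2.
          destruct (Nat.eqb_spec i i0); [subst; unfold t in E3; lra| lra].
        - destruct (Nat.eqb_spec i i0).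
          + subst. unfold S. rewrite Hp0. lra.
          + destruct (S i); lra. }
      rewrite sumV_plus in Hs. rewrite !card_sum. lra. }
    assert (IH' : h * Xf n adj c L F' <= Dd n adj c L F').
    { apply IH; auto.
      - intros i Hi. apply HFG. specialize (HF'S i Hi). lra.
      - assert (Hlt' : INR (card n (fun i => isp (F' i))) < INR (card n S)) by lra.
        apply INR_lt in Hlt'. unfold S in Hlt'. lia.
      - unfold S in Hcard. lra. }
    assert (HPS := HP S HSn Hhalf).
    assert (HD : Dd n adj c L F = t * cutf n adj c L S + Dd n adj c L F').
    { unfold Dd, cutf. rewrite <- sumV_scal, <- sumV_plus. apply sumV_ext. intros i Hi.
      destruct (inG n L i) eqn:Gi.
      - destruct (S i) eqn:Si.
        + rewrite <- sumV_scal, <- sumV_plus. apply sumV_ext. intros j Hj.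
          destruct (adj i j) eqn:Aj; simpl; [|lra].
          unfold inG. destruct (Nat.ltb j n); simpl; [|lra]. destruct (L j); simpl; [lra|].
          unfold F'. rewrite Si. destruct (S j) eqn:Sj; simpl.
          * replace (F i - t - (F j - t)) with (F i - F j) by ring. lra.
          * rewrite (HSf j Sj). specialize (HSge i Si).
            rewrite (posr_pos (F i - 0)), (posr_pos (F i - t - 0)) by lra. ring.
        + rewrite Rmult_0_r, Rplus_0_l. apply sumV_ext. intros j Hj.
          destruct (adj i j && inG n L j) eqn:E; [|lra]. unfold F'. rewrite Si, (HSf i Si).
          destruct (S j) eqn:Sj.
          * specialize (HSge j Sj).
            rewrite (posr_neg (0 - F j)), (posr_neg (0 - (F j - t))) by lra. ring.
          * rewrite (HSf j Sj). lra.
      - destruct (S i) eqn:Si; [|lra]. exfalso. destruct (HSn i Si) as [H1 H2].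
        unfold inG in Gi. rewrite H2 in Gi. apply Nat.ltb_lt in H1. rewrite H1 in Gi. discriminate. }
    assert (HX : Xf n adj c L F = t * volf n adj c L S + Xf n adj c L F').
    { unfold Xf, volf. rewrite <- sumV_scal, <- sumV_plus. apply sumV_ext. intros i Hi.
      fold (Wd n adj c L i). unfold F'.
      destruct (inG n L i) eqn:Gi.
      - destruct (S i) eqn:Si; [ring|]. rewrite (HSf i Si). ring.
      - destruct (S i) eqn:Si; [|lra]. exfalso. destruct (HSn i Si) as [H1 H2].
        unfold inG in Gi. rewrite H2 in Gi. apply Nat.ltb_lt in H1. rewrite H1 in Gi. discriminate. }
    rewrite HD, HX. assert (t * (h * volf n adj c L S) <= t * cutf n adj c L S) by (apply Rmult_le_compat_l; lra).
    nra.
Qed.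

Definition E2p n (adj : nat -> nat -> bool) (c : nat -> nat -> R) (L : nat -> bool) (f : nat -> R) :=
  sumV n (fun i => if inG n L i then
     sumV n (fun j => if adj i j && inG n L j then c i j * (posr (f i - f j))^2 else 0) else 0).

Lemma if_sum (b : bool) n F : (if b then sumV n F else 0) = sumV n (fun j => if b then F j else 0).
Proof. destruct b; [reflexivity|]. rewrite sumV_const; lra. Qed.

Lemma flatten n (b : nat -> bool) (b2 : nat -> nat -> bool) (X : nat -> nat -> R) :
  sumV n (fun i => if b i then sumV n (fun j => if b2 i j then X i j else 0) else 0) =
  sumV n (fun i => sumV n (fun j => if b i && b2 i j then X i j else 0)).
Proof. apply sumV_ext. intros i Hi. destruct (b i); simpl; [reflexivity|]. rewrite sumV_const; lra. Qed.

Lemma dsum_lin n (A B C : nat -> nat -> R) k1 k2 :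
  k1 * sumV n (fun i => sumV n (fun j => A i j)) + k2 * (sumV n (fun i => sumV n (fun j => B i j)) + sumV n (fun i => sumV n (fun j => C i j)))
  = sumV n (fun i => sumV n (fun j => k1 * A i j + k2 * (B i j + C i j))).
Proof. rewrite <- sumV_plus, <- !sumV_scal, <- sumV_plus. apply sumV_ext. intros i Hi.
  rewrite <- sumV_plus, <- !sumV_scal, <- sumV_plus. reflexivity. Qed.

Lemma amgm_pos a b e : 0 <= a -> 0 <= b -> 0 < e ->
  posr (a^2 - b^2) <= (posr (a - b))^2 / (2*e) + e * (a^2 + b^2).
Proof. intros Ha Hb He. destruct (Rle_dec b a).
  - rewrite (posr_pos (a^2 - b^2)) by nra. rewrite (posr_pos (a - b)) by lra.
    assert (H : 0 <= ((a - b) - e*(a+b))^2 / (2*e)) by (apply Rmult_le_pos; [apply pow2_ge_0| left; apply Rinv_0_lt_compat; lra]).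
    assert (H2 : ((a - b) - e*(a+b))^2 / (2*e) = (a-b)^2/(2*e) - (a-b)*(a+b) + e*(a+b)^2/2) by (field; lra).
    assert (0 <= e * (a - b)^2) by (apply Rmult_le_pos; [lra|apply pow2_ge_0]). lra.
  - rewrite posr_neg by nra. assert (0 <= (posr (a - b))^2 / (2*e)).
    { apply Rmult_le_pos; [apply pow2_ge_0| left; apply Rinv_0_lt_compat; lra]. } nra. Qed.

Lemma var_half n adj c L h f :
  (forall i j, adj i j = true -> (i < n)%nat /\ (j < n)%nat) ->
  (forall i j, adj i j = adj j i) -> (forall i j, c i j = c j i) ->
  (forall i j, adj i j = true -> 0 <= c i j) -> 0 < h ->
  (forall S : nat -> bool, (forall i, S i = true -> (i < n)%nat /\ L i = false) ->
       INR (card n S) <= INR n / 2 -> h * volf n adj c L S <= cutf n adj c L S) ->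
  (forall i, 0 <= f i) -> (forall i, 0 < f i -> inG n L i = true) ->
  INR (card n (fun i => isp (f i))) <= INR n / 2 ->
  Xf n adj c L (fun i => (f i)^2) <= 4 / h^2 * E2p n adj c L f.
Proof. intros Hlt Hsym Hcs Hc Hh HP Hf0 HfG Hhalf.
  set (F := fun i => (f i)^2).
  assert (Hcard : card n (fun i => isp (F i)) = card n (fun i => isp (f i))).
  { unfold card. f_equal. apply filter_ext. intros i. unfold F.
    destruct (isp (f i)) eqn:E.
    - apply isp_true in E. apply isp_true. nra.
    - apply isp_false in E. apply isp_false. specialize (Hf0 i). nra. }
  assert (Hco : h * Xf n adj c L F <= Dd n adj c L F).
  { apply (coarea n adj c L h (fun i j H => proj2 (Hlt i j H)) Hc HP (card n (fun i => isp (F i)))); auto.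
    - intros i. unfold F. nra.
    - intros i Hi. apply HfG. unfold F in Hi. destruct (Rlt_dec 0 (f i)); auto. specialize (Hf0 i). nra.
    - rewrite Hcard; auto. }
  set (e := h / 4).
  set (T1 := sumV n (fun i => sumV n (fun j => if inG n L i && adj i j && inG n L j then c i j * F i else 0))).
  set (T2 := sumV n (fun i => sumV n (fun j => if inG n L i && adj i j && inG n L j then c i j * F j else 0))).
  assert (HDd : Dd n adj c L F <= E2p n adj c L f / (2 * e) + e * (T1 + T2)).
  { unfold Dd. rewrite flatten. unfold E2p. rewrite flatten. unfold T1, T2.
    unfold Rdiv. rewrite Rmult_comm. rewrite dsum_lin.
    apply sumV_le. intros i Hi. apply sumV_le. intros j Hj.
    destruct (inG n L i && (adj i j && inG n L j)) eqn:E0; [|rewrite andb_assoc in E0; rewrite E0; lra].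
    rewrite andb_assoc in E0. rewrite E0.
    assert (0 <= c i j) by (apply Hc; apply andb_prop in E0 as [E0 _]; apply andb_prop in E0; tauto).
    assert (He : 0 < e) by (unfold e; lra).
    assert (Ha := amgm_pos (f i) (f j) e (Hf0 i) (Hf0 j) He). unfold F.
    replace (/ (2 * e) * (c i j * posr (f i - f j) ^ 2)) with (c i j * (posr (f i - f j) ^ 2 / (2 * e))) by (field; lra).
    assert (c i j * posr (f i ^ 2 - f j ^ 2) <= c i j * (posr (f i - f j) ^ 2 / (2 * e) + e * (f i ^ 2 + f j ^ 2))) by (apply Rmult_le_compat_l; auto).
    lra. }
  assert (HT1 : T1 = Xf n adj c L F).
  { unfold T1, Xf. apply sumV_ext. intros i Hi. destruct (inG n L i); simpl.
    - unfold Wd. rewrite <- sumV_scal. apply sumV_ext. intros j Hj.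
      destruct (adj i j) eqn:A; simpl; [|lra]. unfold inG. destruct (Hlt i j A) as [_ Hjn].
      apply Nat.ltb_lt in Hjn. rewrite Hjn. simpl. destruct (L j); simpl; ring.
    - rewrite sumV_const; lra. }
  assert (HT2 : T2 = T1).
  { unfold T2, T1. rewrite sumV_swap. apply sumV_ext. intros i Hi. apply sumV_ext. intros j Hj.
    rewrite (Hsym j i), (Hcs j i). destruct (inG n L i), (adj i j), (inG n L j); simpl; auto. }
  assert (HX0 : 0 <= Xf n adj c L F).
  { unfold Xf. apply sumV_nonneg. intros i Hi. destruct (inG n L i); [|lra].
    apply Rmult_le_pos; [unfold F; nra|]. unfold Wd. apply sumV_nonneg. intros j Hj.
    destruct (adj i j) eqn:A; simpl; [|lra]. destruct (L j); simpl; [lra|auto]. }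
  rewrite HT2, HT1 in HDd. unfold e in HDd. fold F.
  assert (HE0 : 0 <= E2p n adj c L f).
  { unfold E2p. apply sumV_nonneg. intros i Hi. destruct (inG n L i); [|lra]. apply sumV_nonneg. intros j Hj.
    destruct (adj i j && inG n L j) eqn:E; [|lra]. apply andb_prop in E. apply Rmult_le_pos; [apply Hc; tauto| nra]. }
  set (X := Xf n adj c L F) in *. set (E := E2p n adj c L f) in *.
  replace (E / (2 * (h/4))) with (2 * E / h) in HDd by (field; lra).
  assert (h * X <= 2 * E / h + h / 2 * X) by lra.
  assert (h/2 * X <= 2 * E / h) by lra.
  apply (Rmult_le_reg_l (h^2/2)); [nra|].
  replace (h ^ 2 / 2 * (4 / h ^ 2 * E)) with (h * (2 * E / h)) by (field; lra).
  replace (h^2/2 * X) with (h * (h/2 * X)) by (field; lra).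
  apply Rmult_le_compat_l; lra.
Qed.

Lemma card_le_n n P : INR (card n P) <= INR n.
Proof. rewrite card_sum. rewrite <- (Rmult_1_r (INR n)), <- sumV_const. apply sumV_le.
  intros; destruct (P i); lra. Qed.

Lemma median n (G : nat -> bool) (V : nat -> R) :
  exists m, (m = 0 \/ exists i0, (i0 < n)%nat /\ G i0 = true /\ m = V i0) /\
    INR (card n (fun i => G i && isp (V i - m))) <= INR n / 2 /\
    INR (card n (fun i => G i && isp (m - V i))) <= INR n / 2.
Proof.
  assert (Hn0 : 0 <= INR n) by apply pos_INR.
  destruct (classic (exists i, (i < n)%nat /\ G i = true)) as [Ex|NEx].
  2:{ exists 0. split; [left; auto|]. rewrite !card_none; [simpl; split; lra| |];
      intros i Hi; destruct (G i) eqn:E; auto; exfalso; apply NEx; eauto. }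
  set (cgt := fun t => INR (card n (fun i => G i && isp (V i - t)))).
  destruct (exists_argmin n G (fun i => - V i) Ex) as [i1 [Hi1 [Gi1 Hmax]]].
  set (A := fun i => G i && (if Rle_dec (cgt (V i)) (INR n / 2) then true else false)).
  assert (HA1 : A i1 = true).
  { unfold A. rewrite Gi1. simpl. destruct (Rle_dec (cgt (V i1)) (INR n / 2)) as [|Hno]; auto.
    exfalso. apply Hno. unfold cgt. rewrite card_none; [simpl; lra|]. intros i Hi.
    destruct (G i) eqn:Gi; auto. simpl. apply isp_false. specialize (Hmax i Hi Gi). lra. }
  destruct (exists_argmin n A V (ex_intro _ i1 (conj Hi1 HA1))) as [i0 [Hi0 [Ai0 Hmin]]].
  exists (V i0). split; [right; exists i0; repeat split; auto; unfold A in Ai0; apply andb_prop in Ai0; tauto|].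
  split.
  - unfold A in Ai0. apply andb_prop in Ai0 as [_ H]. destruct (Rle_dec (cgt (V i0)) (INR n / 2)); [auto|discriminate].
  - destruct (Rle_dec (INR (card n (fun i => G i && isp (V i0 - V i)))) (INR n / 2)) as [|Hgt]; auto.
    exfalso. set (B := fun i => G i && isp (V i0 - V i)).
    assert (ExB : exists i, (i < n)%nat /\ B i = true).
    { destruct (classic (exists i, (i < n)%nat /\ B i = true)) as [|NB]; auto. exfalso. apply Hgt.
      fold B. rewrite card_none; [simpl; lra|]. intros i Hi. destruct (B i) eqn:E; auto. exfalso; apply NB; eauto. }
    destruct (exists_argmin n B (fun i => - V i) ExB) as [k [Hk [Bk Hkmax]]].
    assert (Hk1 : V k < V i0) by (unfold B in Bk; apply andb_prop in Bk as [_ Bk]; apply isp_true in Bk; lra).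
    assert (Hcg : cgt (V k) <= INR n / 2).
    { unfold cgt. rewrite !card_sum.
      assert (H1 : sumV n (fun i => if G i && isp (V i - V k) then 1 else 0) <=
                   sumV n (fun i => (if G i then 1 else 0) - (if B i then 1 else 0))).
      { apply sumV_le. intros i Hi. unfold B. destruct (G i) eqn:Gi; simpl; [|lra].
        destruct (isp (V i - V k)) eqn:E1.
        - apply isp_true in E1. destruct (isp (V i0 - V i)) eqn:E2; [|lra].
          exfalso. assert (B i = true) by (unfold B; rewrite Gi, E2; auto). specialize (Hkmax i Hi H). lra.
        - destruct (isp (V i0 - V i)); lra. }
      rewrite sumV_minus in H1. assert (H2 := card_le_n n G). rewrite card_sum in H2.
      unfold B in H1, Hgt. rewrite card_sum in Hgt. lra. }
    assert (A k = true).
    { unfold A. unfold B in Bk. apply andb_prop in Bk as [Gk _]. rewrite Gk. simpl.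
      destruct (Rle_dec (cgt (V k)) (INR n / 2)); auto. }
    specialize (Hmin k Hk H). lra.
Qed.

Definition E2V n (adj : nat -> nat -> bool) (c : nat -> nat -> R) (L : nat -> bool) (V : nat -> R) :=
  sumV n (fun i => if inG n L i then
     sumV n (fun j => if adj i j && inG n L j then c i j * (V i - V j)^2 else 0) else 0).

Lemma posr_lip a b : (posr (posr a - posr b))^2 <= (a - b)^2.
Proof. assert (Hsq : 0 <= (a - b)^2) by apply pow2_ge_0.
  destruct (Rle_dec 0 a), (Rle_dec 0 b); fixneg.
  - rewrite (posr_pos a), (posr_pos b) by lra. destruct (Rle_dec 0 (a - b)).
    + rewrite posr_pos by lra. lra.
    + rewrite posr_neg by lra. simpl; lra.
  - rewrite (posr_pos a), (posr_neg b) by lra. rewrite posr_pos by lra. simpl. nra.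
  - rewrite (posr_neg a), (posr_pos b) by lra. rewrite posr_neg by lra. simpl in *. lra.
  - rewrite (posr_neg a), (posr_neg b) by lra. rewrite posr_neg by lra. simpl in *. lra. Qed.

Lemma posr_sq x : (posr x)^2 + (posr (- x))^2 = x^2.
Proof. destruct (Rle_dec 0 x).
  - rewrite (posr_pos x), (posr_neg (-x)) by lra. ring.
  - rewrite (posr_neg x), (posr_pos (-x)) by lra. ring. Qed.

Lemma isp_posr r : isp (posr r) = isp r.
Proof. destruct (Rle_dec 0 r).
  - rewrite posr_pos; auto.
  - rewrite posr_neg by lra. destruct (isp r) eqn:E; [apply isp_true in E; lra|]. apply isp_false. lra. Qed.

Lemma l2_bound n adj c L h V :
  (forall i j, adj i j = true -> (i < n)%nat /\ (j < n)%nat) ->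
  (forall i j, adj i j = adj j i) -> (forall i j, c i j = c j i) ->
  (forall i j, adj i j = true -> 0 <= c i j) -> 0 < h ->
  (forall S : nat -> bool, (forall i, S i = true -> (i < n)%nat /\ L i = false) ->
       INR (card n S) <= INR n / 2 -> h * volf n adj c L S <= cutf n adj c L S) ->
  exists m, (m = 0 \/ exists i0, (i0 < n)%nat /\ inG n L i0 = true /\ m = V i0) /\
    sumV n (fun i => if inG n L i then (V i - m)^2 * Wd n adj c L i else 0) <= 8 / h^2 * E2V n adj c L V.
Proof. intros Hlt Hsym Hcs Hc Hh HP.
  destruct (median n (inG n L) V) as [m [Hm [Hc1 Hc2]]].
  exists m. split; auto.
  set (fp := fun i => if inG n L i then posr (V i - m) else 0).
  set (fm := fun i => if inG n L i then posr (m - V i) else 0).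
  assert (Hgen : forall g : nat -> R, (forall i, g i = if inG n L i then posr (g i) else 0) ->
     (forall i, inG n L i = true -> (posr (g i) - posr (g i))^2 <= 0) -> True) by auto.
  assert (HE : forall (s : R), (s = 1 \/ s = -1) ->
     let f := fun i => if inG n L i then posr (s * (V i - m)) else 0 in
     Xf n adj c L (fun i => (f i)^2) <= 4 / h^2 * E2V n adj c L V).
  { intros s Hs f. eapply Rle_trans.
    - apply (var_half n adj c L h f Hlt Hsym Hcs Hc Hh HP).
      + intros i. unfold f. destruct (inG n L i); [apply posr_nonneg| lra].
      + intros i. unfold f. destruct (inG n L i) eqn:E; auto. lra.
      + destruct Hs as [-> | ->].
        * replace (card n (fun i => isp (f i))) with (card n (fun i => inG n L i && isp (V i - m))); auto.
          unfold card; f_equal; apply filter_ext; intros i; unfold f; destruct (inG n L i); simpl.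
          -- rewrite isp_posr. f_equal. ring.
          -- unfold isp. destruct (Rlt_dec 0 0); auto; lra.
        * replace (card n (fun i => isp (f i))) with (card n (fun i => inG n L i && isp (m - V i))); auto.
          unfold card; f_equal; apply filter_ext; intros i; unfold f; destruct (inG n L i); simpl.
          -- rewrite isp_posr. f_equal. ring.
          -- unfold isp. destruct (Rlt_dec 0 0); auto; lra.
    - apply Rmult_le_compat_l; [apply Rlt_le; unfold Rdiv; apply Rmult_lt_0_compat; [lra| apply Rinv_0_lt_compat; nra]|].
      unfold E2p, E2V. apply sumV_le. intros i Hi. destruct (inG n L i) eqn:Gi; [|lra].
      apply sumV_le. intros j Hj. destruct (adj i j) eqn:A; simpl; [|lra].
      destruct (inG n L j) eqn:Gj; [|lra]. unfold f. rewrite Gi, Gj.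
      apply Rmult_le_compat_l; [apply Hc; auto|].
      eapply Rle_trans; [apply posr_lip|]. destruct Hs as [-> | ->]; simpl; nra. }
  assert (H1 := HE 1 (or_introl eq_refl)). assert (H2 := HE (-1) (or_intror eq_refl)). cbv beta zeta in H1, H2.
  assert (Hsum : sumV n (fun i => if inG n L i then (V i - m)^2 * Wd n adj c L i else 0) =
     Xf n adj c L (fun i => (if inG n L i then posr (1 * (V i - m)) else 0)^2) +
     Xf n adj c L (fun i => (if inG n L i then posr (-1 * (V i - m)) else 0)^2)).
  { unfold Xf. rewrite <- sumV_plus. apply sumV_ext. intros i Hi. destruct (inG n L i); [|lra].
    rewrite <- (posr_sq (V i - m)). replace (1 * (V i - m)) with (V i - m) by ring.
    replace (-1 * (V i - m)) with (- (V i - m)) by ring. ring. }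
  rewrite Hsum. lra.
Qed.

Definition En n (adj : nat -> nat -> bool) (c : nat -> nat -> R) (U : nat -> R) :=
  sumV n (fun i => sumV n (fun j => if adj i j then c i j * (U i - U j)^2 else 0)).

Lemma dsum_zero n (F : nat -> nat -> R) (G : nat -> R) :
  (forall i, (i < n)%nat -> G i * sumV n (fun j => F i j) = 0) ->
  sumV n (fun i => sumV n (fun j => G i * F i j)) = 0.
Proof. intros H. transitivity (sumV n (fun _ => 0)); [|rewrite sumV_const; lra].
  apply sumV_ext. intros i Hi. rewrite sumV_scal. apply H; auto. Qed.

Lemma dirichlet n adj c (Gam : nat -> bool) V W :
  (forall i j, adj i j = true -> (i < n)%nat /\ (j < n)%nat) ->
  (forall i j, adj i j = adj j i) -> (forall i j, c i j = c j i) ->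
  (forall i j, adj i j = true -> 0 <= c i j) ->
  (forall i, (i < n)%nat -> Gam i = false -> sumV n (fun j => if adj i j then c i j * (V i - V j) else 0) = 0) ->
  (forall i, (i < n)%nat -> Gam i = true -> W i = V i) ->
  En n adj c V <= En n adj c W.
Proof. intros Hlt Hsym Hcs Hc Hh HW.
  set (D := fun i => W i - V i).
  assert (HT1 : sumV n (fun i => sumV n (fun j => D i * (if adj i j then c i j * (V i - V j) else 0))) = 0).
  { apply dsum_zero. intros i Hi. destruct (Gam i) eqn:G.
    - unfold D. rewrite HW by auto. ring.
    - rewrite Hh by auto. ring. }
  assert (HT2 : sumV n (fun i => sumV n (fun j => D j * (if adj i j then c i j * (V i - V j) else 0))) = 0).
  { rewrite sumV_swap.
    transitivity (- sumV n (fun i => sumV n (fun j => D i * (if adj i j then c i j * (V i - V j) else 0)))).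
    - match goal with |- _ = - ?X => replace (- X) with (-1 * X) by ring end. rewrite <- sumV_scal.
      apply sumV_ext. intros i Hi. rewrite <- sumV_scal. apply sumV_ext. intros j Hj.
      rewrite (Hsym j i), (Hcs j i). destruct (adj i j); ring.
    - rewrite HT1. ring. }
  assert (HEq : En n adj c W = 1 * En n adj c V + 1 * (En n adj c D +
     sumV n (fun i => sumV n (fun j => 2 * (D i * (if adj i j then c i j * (V i - V j) else 0)) - 2 * (D j * (if adj i j then c i j * (V i - V j) else 0)))))).
  { unfold En. rewrite dsum_lin. apply sumV_ext. intros i Hi. apply sumV_ext. intros j Hj.
    unfold D. destruct (adj i j); ring. }
  assert (HT : sumV n (fun i => sumV n (fun j => 2 * (D i * (if adj i j then c i j * (V i - V j) else 0)) - 2 * (D j * (if adj i j then c i j * (V i - V j) else 0)))) = 0).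
  { transitivity (2 * sumV n (fun i => sumV n (fun j => D i * (if adj i j then c i j * (V i - V j) else 0))) -
                  2 * sumV n (fun i => sumV n (fun j => D j * (if adj i j then c i j * (V i - V j) else 0)))).
    - rewrite <- !sumV_scal, <- sumV_minus. apply sumV_ext. intros i Hi.
      rewrite <- !sumV_scal, <- sumV_minus. reflexivity.
    - rewrite HT1, HT2. ring. }
  assert (HD0 : 0 <= En n adj c D).
  { unfold En. apply sumV_nonneg. intros i Hi. apply sumV_nonneg. intros j Hj.
    destruct (adj i j) eqn:A; [|lra]. apply Rmult_le_pos; [apply Hc; auto| apply pow2_ge_0]. }
  rewrite HEq, HT. lra.
Qed.

Lemma cn_bound n adj :
  simple_graph n adj ->
  (forall l1 l2, short_cycle n adj l1 -> short_cycle n adj l2 ->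
     distinct_cycles l1 l2 -> cycles_far adj l1 l2 (ln (INR n) / ln (ln (INR n)))) ->
  4 <= ln (INR n) / (10 * ln (ln (INR n))) ->
  0 < ln (INR n) / ln (ln (INR n)) ->
  forall i l, i <> l -> INR (card n (fun j => adj i j && adj j l)) <= 2.
Proof. intros [Hsym [Hirr Hlt]] HP2 Hshort Hpos i l Hil.
  destruct (Rle_dec (INR (card n (fun j => adj i j && adj j l))) 2) as [|Hgt]; auto. exfalso.
  unfold card in Hgt. set (lst := filter (fun j => adj i j && adj j l) (seq 0 n)) in *.
  assert (Hnd : NoDup lst) by (apply NoDup_filter, seq_NoDup).
  assert (Hin : forall j, In j lst -> adj i j = true /\ adj j l = true).
  { intros j Hj. unfold lst in Hj. apply filter_In in Hj as [_ Hj]. apply andb_prop in Hj. auto. }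
  destruct lst as [|j1 [|j2 [|j3 rest]]]; simpl in Hgt; try lra.
  destruct (Hin j1 ltac:(simpl; auto)) as [A1 B1].
  destruct (Hin j2 ltac:(simpl; auto)) as [A2 B2].
  destruct (Hin j3 ltac:(simpl; auto)) as [A3 B3].
  assert (Hne : forall a b, adj a b = true -> a <> b).
  { intros a b H E. subst. rewrite Hirr in H. discriminate. }
  assert (N12 : j1 <> j2). { intro E; subst. inversion Hnd; subst. apply H1; simpl; auto. }
  assert (N13 : j1 <> j3). { intro E; subst. inversion Hnd; subst. apply H1; simpl; auto. }
  assert (N23 : j2 <> j3). { intro E; subst. inversion Hnd; subst. inversion H2; subst. apply H3; simpl; auto. }
  assert (Ni1 := Hne _ _ A1). assert (Ni2 := Hne _ _ A2). assert (Ni3 := Hne _ _ A3).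
  assert (Nl1 := Hne _ _ B1). assert (Nl2 := Hne _ _ B2). assert (Nl3 := Hne _ _ B3).
  assert (Hcyc : forall j, adj i j = true -> adj j l = true -> j <> i -> j <> l -> j <> j1 ->
     short_cycle n adj [i; j1; l; j]).
  { intros j Aj Bj Nij Nlj N1j. split.
    - split; [simpl; lia|]. split.
      + constructor; [simpl; intuition|]. constructor; [simpl; intuition|].
        constructor; [simpl; intuition|]. constructor; [simpl; auto|]. constructor.
      + split; [simpl; repeat split; auto; rewrite Hsym; auto|]. simpl. rewrite Hsym. auto.
    - simpl length. simpl INR. lra. }
  assert (S1 := Hcyc j2 A2 B2 (not_eq_sym Ni2) Nl2 (not_eq_sym N12)).
  assert (S2 := Hcyc j3 A3 B3 (not_eq_sym Ni3) Nl3 (not_eq_sym N13)).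
  assert (Hd : distinct_cycles [i; j1; l; j2] [i; j1; l; j3]).
  { exists j2, i. intros [H _].
    assert (cyc_edge [i; j1; l; j2] j2 i) by (left; simpl; auto 10).
    specialize (H H0). destruct H as [H|H]; simpl in H;
    repeat (destruct H as [H|H]; [inversion H; subst; congruence|]); contradiction. }
  assert (Hf := HP2 _ _ S1 S2 Hd i i 0%nat [i] ltac:(simpl; auto) ltac:(simpl; auto)).
  assert (ln (INR n) / ln (ln (INR n)) <= INR 0).
  { apply Hf. split; [simpl; auto|]. split; [reflexivity|]. split; reflexivity. }
  simpl in H. lra.
Qed.

Definition Qm n adj c u j := c u j / ctot n adj c u.

Lemma sumQ1 n adj c u : 0 < ctot n adj c u -> sumV n (fun j => if adj u j then Qm n adj c u j else 0) = 1.
Proof. intros H. unfold Qm.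
  transitivity (sumV n (fun j => / ctot n adj c u * (if adj u j then c u j else 0))).
  - apply sumV_ext. intros j _. destruct (adj u j); unfold Rdiv; ring.
  - rewrite sumV_scal. change (sumV n (fun j => if adj u j then c u j else 0)) with (ctot n adj c u). field; lra. Qed.

Lemma harm_exp n adj c V m u : 0 < ctot n adj c u ->
  sumV n (fun j => if adj u j then c u j * (V u - V j) else 0) = 0 ->
  V u - m = sumV n (fun j => if adj u j then Qm n adj c u j * (V j - m) else 0).
Proof. intros Hc H.
  assert (E : sumV n (fun j => if adj u j then c u j * (V u - V j) else 0) =
              (V u - m) * ctot n adj c u - sumV n (fun j => if adj u j then c u j * (V j - m) else 0)).
  { unfold ctot. rewrite <- sumV_scal, <- sumV_minus. apply sumV_ext. intros j _. destruct (adj u j); ring. }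
  rewrite H in E. unfold Qm.
  transitivity (/ ctot n adj c u * sumV n (fun j => if adj u j then c u j * (V j - m) else 0)).
  - apply (Rmult_eq_reg_l (ctot n adj c u)); [|lra]. field_simplify; [lra|lra].
  - rewrite <- sumV_scal. apply sumV_ext. intros j _. destruct (adj u j); unfold Rdiv; ring. Qed.

Lemma local_step n adj c (Gam : nat -> bool) V m q K Bs :
  (forall i j, adj i j = true -> (i < n)%nat /\ (j < n)%nat) ->
  (forall u, (u < n)%nat -> Gam u = false -> sumV n (fun j => if adj u j then c u j * (V u - V j) else 0) = 0) ->
  (forall u, (u < n)%nat -> 0 < ctot n adj c u) ->
  (forall u j, adj u j = true -> 0 <= Qm n adj c u j <= q) ->
  (forall j, (j < n)%nat -> Rabs (V j - m) <= 1) ->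
  INR (card n Gam) <= K ->
  (forall i l, i <> l -> INR (card n (fun j => adj i j && adj j l)) <= 2) ->
  sumV n (fun l => (V l - m)^2) <= Bs -> 0 < q ->
  forall i0, (i0 < n)%nat -> Gam i0 = false ->
  Rabs (V i0 - m) <= q * K + q * (3/2) + q * Bs / 2.
Proof. intros Hlt Hh Hct HQ Hg1 HK Hcn HBs Hq i0 Hi0 G0.
  set (g := fun l => V l - m).
  set (Q := Qm n adj c).
  set (A := fun j => adj i0 j && negb (Gam j)).
  set (R := fun l => sumV n (fun j => if A j && adj j l then Q i0 j * Q j l else 0)).
  assert (Hexp := harm_exp n adj c V m i0 (Hct i0 Hi0) (Hh i0 Hi0 G0)). fold Q in Hexp.
  assert (Hsplit : V i0 - m = sumV n (fun j => if adj i0 j && Gam j then Q i0 j * g j else 0) +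
                             sumV n (fun l => R l * g l)).
  { rewrite Hexp. unfold R. 
    transitivity (sumV n (fun j => if adj i0 j && Gam j then Q i0 j * g j else 0) +
                  sumV n (fun j => sumV n (fun l => if A j && adj j l then Q i0 j * Q j l * g l else 0))).
    - rewrite <- sumV_plus. apply sumV_ext. intros j Hj. unfold A.
      destruct (adj i0 j) eqn:Aj; simpl; [|rewrite sumV_const; lra].
      destruct (Gam j) eqn:Gj; simpl; [rewrite sumV_const; unfold g; lra|].
      rewrite Rplus_0_l. rewrite (harm_exp n adj c V m j (Hct j (proj2 (Hlt _ _ Aj))) (Hh j (proj2 (Hlt _ _ Aj)) Gj)).
      fold Q. rewrite <- sumV_scal. apply sumV_ext. intros l _. destruct (adj j l); unfold g; ring.
    - f_equal. rewrite sumV_swap. apply sumV_ext. intros l _. rewrite Rmult_comm, <- sumV_scal.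
      apply sumV_ext. intros j _. destruct (A j && adj j l); ring. }
  assert (HQ' : forall u j, adj u j = true -> 0 <= Q u j <= q) by (intros; apply HQ; auto).
  assert (HR0 : forall l, 0 <= R l).
  { intros l. unfold R. apply sumV_nonneg. intros j _. destruct (A j && adj j l) eqn:E; [|lra].
    apply andb_prop in E as [E1 E2]. unfold A in E1. apply andb_prop in E1 as [E1 _].
    apply Rmult_le_pos; [apply HQ'; auto| apply HQ'; auto]. }
  assert (HT1 : Rabs (sumV n (fun j => if adj i0 j && Gam j then Q i0 j * g j else 0)) <= q * K).
  { eapply Rle_trans; [apply sumV_abs|].
    apply Rle_trans with (sumV n (fun j => q * (if Gam j then 1 else 0))).
    - apply sumV_le. intros j Hj. destruct (adj i0 j) eqn:Aj; simpl; [|rewrite Rabs_R0; destruct (Gam j); lra].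
      destruct (Gam j); [|rewrite Rabs_R0; lra]. rewrite Rabs_mult. destruct (HQ' _ _ Aj).
      rewrite Rabs_pos_eq by lra. specialize (Hg1 j Hj). unfold g. 
      assert (Rabs (V j - m) * Q i0 j <= 1 * q) by (apply Rmult_le_compat; auto; apply Rabs_pos). lra.
    - rewrite sumV_scal, <- card_sum. apply Rmult_le_compat_l; lra. }
  assert (HRsum : sumV n R <= 1).
  { unfold R. rewrite sumV_swap.
    rewrite <- (sumQ1 n adj c i0 (Hct i0 Hi0)). apply sumV_le. intros j Hj.
    destruct (A j) eqn:Aj; simpl.
    - unfold A in Aj. apply andb_prop in Aj as [Aj _]. rewrite Aj.
      fold (Qm n adj c i0 j). fold Q.
      apply Req_le. transitivity (Q i0 j * sumV n (fun l => if adj j l then Qm n adj c j l else 0)).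
      + rewrite <- sumV_scal. apply sumV_ext. intros l _. fold Q. destruct (adj j l); simpl; ring.
      + rewrite (sumQ1 n adj c j (Hct j (proj2 (Hlt _ _ Aj)))). ring.
    - rewrite sumV_const. destruct (adj i0 j) eqn:E; [|lra]. fold (Qm n adj c i0 j). fold Q.
      destruct (HQ' _ _ E); lra. }
  assert (HRi0 : R i0 <= q).
  { unfold R. apply Rle_trans with (sumV n (fun j => q * (if adj i0 j then Q i0 j else 0))).
    - apply sumV_le. intros j _. destruct (A j && adj j i0) eqn:E.
      + apply andb_prop in E as [E1 E2]. unfold A in E1. apply andb_prop in E1 as [E1 _]. rewrite E1.
        destruct (HQ' _ _ E1). destruct (HQ' _ _ E2). nra.
      + destruct (adj i0 j) eqn:E1; [|lra]. destruct (HQ' _ _ E1). nra.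
    - rewrite sumV_scal. unfold Q. rewrite sumQ1 by (apply Hct; auto). lra. }
  assert (HRl : forall l, l <> i0 -> R l <= 2 * q^2).
  { intros l Hl. unfold R. apply Rle_trans with (sumV n (fun j => q^2 * (if adj i0 j && adj j l then 1 else 0))).
    - apply sumV_le. intros j _. destruct (A j && adj j l) eqn:E.
      + apply andb_prop in E as [E1 E2]. unfold A in E1. apply andb_prop in E1 as [E1 _]. rewrite E1, E2.
        destruct (HQ' _ _ E1). destruct (HQ' _ _ E2). simpl. nra.
      + destruct (adj i0 j && adj j l); simpl; nra.
    - rewrite sumV_scal, <- card_sum. specialize (Hcn i0 l (not_eq_sym Hl)). nra. }
  assert (HR2 : sumV n (fun l => (R l)^2) <= 3 * q^2).
  { apply Rle_trans with (sumV n (fun l => (if Nat.eqb l i0 then q * R i0 else 0) + 2 * q^2 * R l)).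
    - apply sumV_le. intros l _. destruct (Nat.eqb_spec l i0).
      + subst. specialize (HR0 i0). simpl. nra.
      + specialize (HRl l n0). specialize (HR0 l). simpl. nra.
    - rewrite sumV_plus, sumV_ind by auto. rewrite sumV_scal. specialize (HR0 i0). nra. }
  assert (HT2 : Rabs (sumV n (fun l => R l * g l)) <= q * (3/2) + q * Bs / 2).
  { eapply Rle_trans; [apply sumV_abs|].
    apply Rle_trans with (sumV n (fun l => / (2*q) * (R l)^2 + q/2 * (g l)^2)).
    - apply sumV_le. intros l _. rewrite Rabs_mult, (Rabs_pos_eq (R l)) by auto.
      assert (Hsq : 0 <= (R l - q * Rabs (g l))^2 / (2*q)) by (apply Rmult_le_pos; [apply pow2_ge_0| left; apply Rinv_0_lt_compat; lra]).
      assert (Hid : (R l - q * Rabs (g l))^2 / (2*q) = / (2*q) * (R l)^2 + q/2 * (Rabs (g l))^2 - R l * Rabs (g l)) by (field; lra).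
      rewrite <- (pow2_abs (g l)). lra.
    - rewrite sumV_plus, !sumV_scal.
      assert (/ (2*q) * sumV n (fun l => R l ^ 2) <= / (2*q) * (3 * q^2)) by (apply Rmult_le_compat_l; [left; apply Rinv_0_lt_compat; lra| auto]).
      assert (q/2 * sumV n (fun l => g l ^ 2) <= q/2 * Bs) by (apply Rmult_le_compat_l; [lra| auto]).
      replace (/ (2*q) * (3 * q^2)) with (q * (3/2)) in H by (field; lra). lra. }
  rewrite Hsplit. eapply Rle_trans; [apply Rabs_triang|]. lra.
Qed.

Definition gam (x : nat -> nat) (K : nat) (i : nat) : bool := existsb (fun k => Nat.eqb (x k) i) (seq 0 K).

Lemma gam_spec x K i : gam x K i = true <-> exists k, (k < K)%nat /\ x k = i.
Proof. unfold gam. rewrite existsb_exists. split.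
  - intros [k [Hk E]]. apply in_seq in Hk. apply Nat.eqb_eq in E. exists k; split; [lia|auto].
  - intros [k [Hk E]]. exists k. split; [apply in_seq; lia| apply Nat.eqb_eq; auto]. Qed.

Lemma sum_point n K (x : nat -> nat) (F : nat -> R) :
  (forall k, (k < K)%nat -> (x k < n)%nat) ->
  sumV K (fun k => sumV n (fun i => if Nat.eqb (x k) i then F i else 0)) = sumV K (fun k => F (x k)).
Proof. intros Hx. apply sumV_ext. intros k Hk.
  transitivity (sumV n (fun i => if Nat.eqb i (x k) then F (x k) else 0)).
  - apply sumV_ext. intros i _. rewrite Nat.eqb_sym. destruct (Nat.eqb_spec i (x k)); subst; auto.
  - apply sumV_ind; auto. Qed.

Lemma card_gam n x K : (forall k, (k < K)%nat -> (x k < n)%nat) -> INR (card n (gam x K)) <= INR K.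
Proof. intros Hx. rewrite card_sum.
  apply Rle_trans with (sumV n (fun i => sumV K (fun k => if Nat.eqb (x k) i then 1 else 0))).
  - apply sumV_le. intros i Hi. destruct (gam x K i) eqn:G.
    + apply gam_spec in G as [k [Hk E]].
      assert (H := sumV_ge_term K (fun k => if Nat.eqb (x k) i then 1 else 0) k). simpl in H.
      rewrite E, Nat.eqb_refl in H. apply H; auto. intros; destruct (Nat.eqb (x i0) i); lra.
    + apply sumV_nonneg. intros k _. destruct (Nat.eqb (x k) i); lra.
  - rewrite sumV_swap. rewrite (sum_point n K x (fun _ => 1)) by auto. rewrite sumV_const. lra. Qed.

Lemma reindex n x K (F : nat -> R) :
  (forall k, (k < K)%nat -> (x k < n)%nat) ->
  (forall k l, (k < K)%nat -> (l < K)%nat -> x k = x l -> k = l) ->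
  sumV n (fun i => if gam x K i then F i else 0) = sumV K (fun k => F (x k)).
Proof. intros Hx Hinj.
  transitivity (sumV n (fun i => sumV K (fun k => if Nat.eqb (x k) i then F i else 0))).
  - apply sumV_ext. intros i Hi. destruct (gam x K i) eqn:G.
    + apply gam_spec in G as [k0 [Hk0 E]].
      transitivity (sumV K (fun k => if Nat.eqb k k0 then F i else 0)); [symmetry; apply sumV_ind; auto|].
      apply sumV_ext. intros k Hk. destruct (Nat.eqb_spec k k0), (Nat.eqb_spec (x k) i); subst; auto.
      * exfalso; auto.
      * exfalso. apply n0. apply Hinj; auto.
    + transitivity (sumV K (fun _ => 0)); [rewrite sumV_const; lra|]. apply sumV_ext. intros k Hk.
      destruct (Nat.eqb_spec (x k) i); auto. exfalso. assert (gam x K i = true) by (apply gam_spec; eauto). congruence.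
  - rewrite sumV_swap. apply sum_point; auto. Qed.

Lemma antisym_sum n (a : nat -> nat -> R) : (forall i j, a j i = - a i j) ->
  sumV n (fun i => sumV n (fun j => a i j)) = 0.
Proof. intros H. set (S := sumV n (fun i => sumV n (fun j => a i j))).
  assert (S = - S).
  { unfold S at 1. rewrite sumV_swap.
    transitivity (-1 * S); [|ring]. unfold S. rewrite <- sumV_scal. apply sumV_ext. intros i _.
    rewrite <- sumV_scal. apply sumV_ext. intros j _. rewrite H. ring. }
  lra. Qed.

Lemma ln_le' a b : 0 < a -> a <= b -> ln a <= ln b.
Proof. intros Ha Hab. destruct (Req_dec a b) as [->|Hne]; [lra|]. left. apply ln_increasing; lra. Qed.

Lemma numerics l : 6400 <= l -> 4 <= l / (10 * ln l) /\ 0 < l / ln l /\ 0 < ln l.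
Proof. intros Hl.
  assert (Hln0 : 0 < ln l). { rewrite <- ln_1. apply ln_increasing; lra. }
  assert (He : l <= exp (l / 40)).
  { replace (l/40) with (l/80 + l/80) by field. rewrite exp_plus.
    assert (H1 := exp_ineq1_le (l/80)). nra. }
  assert (Hln : ln l <= l / 40). { rewrite <- (ln_exp (l/40)). apply ln_le'; lra. }
  split; [|split; auto].
  - apply (Rmult_le_reg_r (10 * ln l)); [lra|]. unfold Rdiv. rewrite Rmult_assoc, Rinv_l by lra. lra.
  - apply Rdiv_lt_0_compat; lra. Qed.

Lemma ctot_bounds n adj c C1 C2 u :
  (forall j, adj u j = true -> C1 <= c u j <= C2) ->
  C1 * INR (degree n adj u) <= ctot n adj c u <= C2 * INR (degree n adj u).
Proof. intros H. unfold degree, ctot. rewrite card_sum. rewrite <- !sumV_scal. split; apply sumV_le; intros j _;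
  destruct (adj u j) eqn:E; try (specialize (H j E)); lra. Qed.

Lemma sq_le1 c a b : 0 <= c -> 0 <= a <= 1 -> 0 <= b <= 1 -> c * (a - b)^2 <= c.
Proof. intros Hc Ha Hb. assert ((a - b)^2 <= 1).
  { assert (-1 <= a - b <= 1) by lra. assert (Rabs (a - b) <= 1) by (apply Rabs_le; lra).
    rewrite <- pow2_abs. assert (0 <= Rabs (a-b)) by apply Rabs_pos. simpl. nra. }
  assert (c * (a - b)^2 <= c * 1) by (apply Rmult_le_compat_l; auto). lra. Qed.

Theorem theorem3p1 :
  forall (C1 C2 : R) (K : nat) (C delta : R),
    0 < C1 -> C1 <= C2 -> (1 <= K)%nat -> 0 < C -> 0 < delta ->
    exists (M : R) (n0 : nat),
      forall (n : nat) (adj : nat -> nat -> bool),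
        (n0 <= n)%nat ->
        proper n adj C1 C2 K C delta ->
        forall (c : nat -> nat -> R) (x : nat -> nat) (p : nat -> R) (V : nat -> R),
          conductance adj C1 C2 c ->
          (forall k, (k < K)%nat -> (x k < n)%nat) ->
          (forall k l, (k < K)%nat -> (l < K)%nat -> x k = x l -> k = l) ->
          (forall k, (k < K)%nat -> 0 <= p k <= 1) ->
          (forall k, (k < K)%nat -> V (x k) = p k) ->
          harmonic_off n adj c (fun i => exists k, (k < K)%nat /\ x k = i) V ->
          forall i, (i < n)%nat -> ~ (exists k, (k < K)%nat /\ x k = i) ->
            Rabs (V i - sumK K (fun k => p k * ctot n adj c (x k)) /
                        sumK K (fun k => ctot n adj c (x k)))
              <= M / ln (INR n).
Proof.
  intros C1 C2 K C delta HC1 HC12 HK HC Hd.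
  set (KR := INR K).
  assert (HKR : 1 <= KR) by (unfold KR; apply (le_INR 1); auto).
  set (h := C1 / (6 * C2)).
  assert (Hh : 0 < h) by (unfold h; apply Rdiv_lt_0_compat; lra).
  set (B := 128 * KR * C2 / (h^2 * C1 * delta)).
  set (Bs := B + KR).
  set (q' := C2 / (C1 * delta * C)).
  set (beta' := q' * (KR + 3/2 + Bs/2)).
  set (M := 2 * beta' + KR^2 * C2 / (C1 * delta * C)).
  set (T := 6400 + 2 * KR / (delta * C)).
  destruct (INR_archimed 1 (exp T)) as [N HN]; [lra|].
  exists M, N.
  intros n adj Hn Hprop c x p V Hcond Hx Hinj Hp HVx Hharm i Hi HiG.
  set (lam := ln (INR n)).
  assert (Hlam : T <= lam).
  { unfold lam. rewrite <- (ln_exp T). apply ln_le'; [apply exp_pos|].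
    apply le_INR in Hn. lra. }

  assert (HT0 : 0 <= 2 * KR / (delta * C)) by (apply Rlt_le, Rdiv_lt_0_compat; nra).
  assert (HT6400 : 6400 <= lam) by (unfold T in Hlam; lra).
  assert (HdCl : 2 * KR <= delta * C * lam).
  { assert (delta * C * (2 * KR / (delta * C)) <= delta * C * lam) by (apply Rmult_le_compat_l; [nra| unfold T in Hlam; lra]).
    replace (delta * C * (2 * KR / (delta * C))) with (2 * KR) in H by (field; nra). lra. }
  destruct (numerics lam HT6400) as [Hshort [Hfar Hlnl]].
  assert (Hlam0 : 0 < lam) by lra.
  destruct Hprop as [Hsg [Hcon [HP2 [HP3 [HP4 HP5]]]]].
  pose proof Hsg as [Hsym [Hirr Hlt]].
  destruct Hcond as [Hcs Hcb].
  set (Gm := gam x K).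
  assert (HGm : forall u, Gm u = true <-> exists k, (k < K)%nat /\ x k = u) by (intros; apply gam_spec).
  assert (Hh' : forall u, (u < n)%nat -> Gm u = false ->
     sumV n (fun j => if adj u j then c u j * (V u - V j) else 0) = 0).
  { intros u Hu Gu. apply Hharm; auto. intros Hex. apply HGm in Hex. congruence. }
  assert (Hc0 : forall u j, adj u j = true -> 0 < c u j) by (intros u j H; specialize (Hcb _ _ H); lra).
  assert (Hcnn : forall u j, adj u j = true -> 0 <= c u j) by (intros u j H; specialize (Hc0 _ _ H); lra).
  assert (Hdeg : forall u, (u < n)%nat -> delta * C * lam < INR (degree n adj u) < 4 * C * lam) by (intros; apply HP5; auto).
  assert (Hct : forall u, (u < n)%nat -> C1 * delta * C * lam < ctot n adj c u <= C2 * (4 * C * lam)).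
  { intros u Hu. destruct (ctot_bounds n adj c C1 C2 u (Hcb u)). destruct (Hdeg u Hu). split; nra. }
  assert (Hctpos : forall u, (u < n)%nat -> 0 < ctot n adj c u).
  { intros u Hu. destruct (Hct u Hu). assert (0 < C1 * delta * C * lam) by (repeat apply Rmult_lt_0_compat; lra). lra. }
  set (q := q' / lam).
  assert (Hq'0 : 0 < q') by (unfold q'; apply Rdiv_lt_0_compat; [lra| repeat apply Rmult_lt_0_compat; lra]).
  assert (Hq : 0 < q) by (unfold q; apply Rdiv_lt_0_compat; lra).
  assert (HQ : forall u j, adj u j = true -> 0 <= Qm n adj c u j <= q).
  { intros u j A. destruct (Hlt u j A) as [Hu _]. destruct (Hct u Hu) as [Hl _]. specialize (Hcb _ _ A).
    assert (Hp0 : 0 < C1 * delta * C * lam) by (repeat apply Rmult_lt_0_compat; lra).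
    unfold Qm. split; [apply Rlt_le, Rdiv_lt_0_compat; lra|].
    apply Rle_trans with (C2 / ctot n adj c u).
    - unfold Rdiv. apply Rmult_le_compat_r; [left; apply Rinv_0_lt_compat; lra| lra].
    - apply Rle_trans with (C2 / (C1 * delta * C * lam)).
      + unfold Rdiv. apply Rmult_le_compat_l; [lra|]. apply Rinv_le_contravar; lra.
      + unfold q, q'. right. field. repeat split; lra. }
  assert (HcardG : INR (card n Gm) <= KR) by (apply card_gam; auto).
  assert (Hx0 : (x 0%nat < n)%nat) by (apply Hx; lia).
  assert (HGx0 : Gm (x 0%nat) = true) by (apply HGm; exists 0%nat; split; [lia|auto]).
  assert (HGmV : forall u, Gm u = true -> 0 <= V u <= 1).
  { intros u G. apply HGm in G as [k [Hk E]]. subst. rewrite HVx by auto. apply Hp; auto. }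
  assert (HV1 : forall j, (j < n)%nat -> V j <= 1).
  { apply (maxprin n adj c Gm V 1 (x 0%nat) Hsg Hcon Hc0 Hx0 HGx0); auto.
    intros u _ G. apply HGmV; auto. }
  assert (HV0 : forall j, (j < n)%nat -> - V j <= 0).
  { apply (maxprin n adj c Gm (fun j => - V j) 0 (x 0%nat) Hsg Hcon Hc0 Hx0 HGx0).
    - intros u _ G. specialize (HGmV u G). lra.
    - intros u Hu G. transitivity (-1 * sumV n (fun j => if adj u j then c u j * (V u - V j) else 0)).
      + rewrite <- sumV_scal. apply sumV_ext. intros j _. destruct (adj u j); ring.
      + rewrite Hh' by auto. ring. }

  assert (HP' : forall S : nat -> bool, (forall i, S i = true -> (i < n)%nat /\ Gm i = false) ->
       INR (card n S) <= INR n / 2 -> h * volf n adj c Gm S <= cutf n adj c Gm S).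
  { intros S HS Hhalf.
    assert (Hcut0 : 0 <= cutf n adj c Gm S).
    { unfold cutf. apply sumV_nonneg. intros u _. destruct (S u); [|lra]. apply sumV_nonneg. intros j _.
      destruct (adj u j) eqn:A; simpl; [|lra]. destruct (_ && _); [apply Hcnn; auto| lra]. }
    assert (Hvol0 : 0 <= volf n adj c Gm S).
    { unfold volf. apply sumV_nonneg. intros u _. destruct (S u); [|lra]. apply sumV_nonneg. intros j _.
      destruct (adj u j) eqn:A; simpl; [|lra]. destruct (negb _); [apply Hcnn; auto| lra]. }
    destruct (classic (exists i, S i = true)) as [Ex|NEx].
    - assert (HL : forall i, Gm i = true -> (i < n)%nat).
      { intros u G. apply HGm in G as [k [Hk E]]. subst. auto. }
      assert (HcK : (card n Gm <= K)%nat) by (apply INR_le; auto).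
      specialize (HP4 c Gm S (conj Hcs Hcb) HL HcK HS Ex Hhalf). cbv zeta in HP4.
      change (cutf n adj c Gm S / volf n adj c Gm S >= C1 / (6 * C2)) in HP4. fold h in HP4.
      destruct (Req_dec (volf n adj c Gm S) 0) as [E|NE].
      + rewrite E. lra.
      + assert (Hv : 0 < volf n adj c Gm S) by lra.
        apply Rge_le in HP4. apply (Rmult_le_compat_r (volf n adj c Gm S)) in HP4; [|lra].
        unfold Rdiv in HP4. rewrite Rmult_assoc, Rinv_l in HP4 by lra. lra.
    - assert (Hv : volf n adj c Gm S = 0).
      { unfold volf. transitivity (sumV n (fun _ => 0)); [|rewrite sumV_const; lra]. apply sumV_ext.
        intros u _. destruct (S u) eqn:E; auto. exfalso; eauto. }
      rewrite Hv. lra. }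
  destruct (l2_bound n adj c Gm h V Hlt Hsym Hcs Hcnn Hh HP') as [m [Hm HL2]].
  assert (Hm01 : 0 <= m <= 1).
  { destruct Hm as [-> | [i0 [Hi0 [_ ->]]]]; [lra|]. split; [specialize (HV0 i0 Hi0); lra| auto]. }
  assert (Hg1 : forall j, (j < n)%nat -> Rabs (V j - m) <= 1).
  { intros j Hj. specialize (HV0 j Hj). specialize (HV1 j Hj). apply Rabs_le. lra. }
  set (W := fun j => if Gm j then V j else 0).
  assert (HE1 : E2V n adj c Gm V <= En n adj c V).
  { unfold E2V, En. apply sumV_le. intros u Hu. destruct (inG n Gm u).
    - apply sumV_le. intros j _. destruct (adj u j) eqn:A; simpl; [|lra].
      destruct (inG n Gm j); [lra|]. apply Rmult_le_pos; [apply Hcnn; auto| apply pow2_ge_0].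
    - apply sumV_nonneg. intros j _. destruct (adj u j) eqn:A; [|lra].
      apply Rmult_le_pos; [apply Hcnn; auto| apply pow2_ge_0]. }
  assert (HE2 : En n adj c V <= En n adj c W).
  { apply (dirichlet n adj c Gm V W Hlt Hsym Hcs Hcnn Hh'). intros u _ G. unfold W. rewrite G. auto. }
  set (Y := sumV n (fun u => sumV n (fun j => if adj u j && Gm u then c u j else 0))).
  assert (HY : Y <= 4 * C2 * C * lam * KR).
  { unfold Y. apply Rle_trans with (sumV n (fun u => (4 * C2 * C * lam) * (if Gm u then 1 else 0))).
    - apply sumV_le. intros u Hu. destruct (Gm u) eqn:G.
      + transitivity (ctot n adj c u).
        * right. unfold ctot. apply sumV_ext. intros j _. destruct (adj u j); auto.
        * destruct (Hct u Hu). lra.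
      + rewrite Rmult_0_r. right. transitivity (sumV n (fun _ => 0)); [|rewrite sumV_const; lra].
        apply sumV_ext. intros j _. destruct (adj u j); auto.
    - rewrite sumV_scal, <- card_sum. apply Rmult_le_compat_l; [|auto].
      repeat apply Rmult_le_pos; lra. }
  assert (HEW : En n adj c W <= 8 * KR * C2 * C * lam).
  { apply Rle_trans with (1 * Y + 1 * (sumV n (fun u => sumV n (fun j => 0)) + sumV n (fun u => sumV n (fun j => if adj j u && Gm j then c j u else 0)))).
    - unfold Y. rewrite dsum_lin. apply sumV_le. intros u Hu. apply sumV_le. intros j Hj.
      rewrite (Hsym j u), (Hcs j u). unfold W.
      destruct (adj u j) eqn:A; simpl; [|lra]. assert (Hc' := Hcnn _ _ A).
      destruct (Gm u) eqn:Gu, (Gm j) eqn:Gj; simpl.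
      + pose proof (sq_le1 _ _ _ Hc' (HGmV u Gu) (HGmV j Gj)). lra.
      + pose proof (sq_le1 _ _ 0 Hc' (HGmV u Gu)). lra.
      + pose proof (sq_le1 _ 0 _ Hc' (ltac:(lra) : 0 <= 0 <= 1) (HGmV j Gj)). lra.
      + replace (0 - 0) with 0 by ring. simpl. lra.
    - assert (Hz : sumV n (fun u => sumV n (fun j => 0)) = 0).
      { transitivity (sumV n (fun _ => 0)); [apply sumV_ext; intros; rewrite sumV_const; lra| rewrite sumV_const; lra]. }
      rewrite Hz. rewrite sumV_swap. fold Y. lra. }

  assert (HWd : forall u, inG n Gm u = true -> C1 * delta * C * lam / 2 <= Wd n adj c Gm u).
  { intros u Gu. unfold inG in Gu. apply andb_prop in Gu as [Hu _]. apply Nat.ltb_lt in Hu.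
    apply Rle_trans with (C1 * (INR (degree n adj u) - INR (card n Gm))).
    - destruct (Hdeg u Hu). nra.
    - unfold degree. rewrite !card_sum, <- sumV_minus, <- sumV_scal. unfold Wd. apply sumV_le. intros j _.
      destruct (adj u j) eqn:A, (Gm j); simpl; try lra. specialize (Hcb _ _ A). lra. }
  assert (HBs : sumV n (fun l => (V l - m)^2) <= Bs).
  { set (k0 := 2 / (C1 * delta * C * lam)).
    assert (Hk0 : 0 < k0) by (unfold k0; apply Rdiv_lt_0_compat; [lra| repeat apply Rmult_lt_0_compat; lra]).
    apply Rle_trans with (k0 * sumV n (fun i => if inG n Gm i then (V i - m)^2 * Wd n adj c Gm i else 0) +
                          sumV n (fun l => if Gm l then 1 else 0)).
    - rewrite <- sumV_scal, <- sumV_plus. apply sumV_le. intros l Hl.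
      unfold inG. apply Nat.ltb_lt in Hl. rewrite Hl. simpl. destruct (Gm l) eqn:G; simpl.
      + rewrite Rmult_0_r, Rplus_0_l. apply Rle_trans with ((Rabs (V l - m))^2); [rewrite pow2_abs; lra|].
        apply Nat.ltb_lt in Hl. specialize (Hg1 l Hl). assert (0 <= Rabs (V l - m)) by apply Rabs_pos. simpl. nra.
      + assert (HW := HWd l). unfold inG in HW. apply Nat.ltb_lt in Hl. rewrite G in HW.
        apply Nat.ltb_lt in Hl. rewrite Hl in HW. specialize (HW eq_refl).
        assert (1 <= k0 * Wd n adj c Gm l).
        { apply Rle_trans with (k0 * (C1 * delta * C * lam / 2)).
          - unfold k0. right. field. repeat split; lra.
          - apply Rmult_le_compat_l; lra. }
        assert (0 <= (V l - m)^2) by apply pow2_ge_0. nra.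
    - rewrite <- card_sum. unfold Bs.
      assert (k0 * sumV n (fun i => if inG n Gm i then (V i - m)^2 * Wd n adj c Gm i else 0) <= k0 * (8 / h^2 * (8 * KR * C2 * C * lam))).
      { apply Rmult_le_compat_l; [lra|]. eapply Rle_trans; [apply HL2|]. apply Rmult_le_compat_l.
        - apply Rlt_le, Rdiv_lt_0_compat; [lra| nra].
        - lra. }
      assert (k0 * (8 / h^2 * (8 * KR * C2 * C * lam)) = B).
      { unfold k0, B. field. repeat split; try lra; nra. }
      lra. }
  assert (Hcn := cn_bound n adj Hsg HP2 Hshort Hfar).
  assert (Hloc := local_step n adj c Gm V m q KR Bs Hlt Hh' Hctpos HQ Hg1 HcardG Hcn HBs Hq).
  set (beta := beta' / lam).
  assert (Hbeta : forall u, (u < n)%nat -> Gm u = false -> Rabs (V u - m) <= beta).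
  { intros u Hu G. eapply Rle_trans; [apply Hloc; auto|]. right. unfold beta, beta', q. field. lra. }

  set (Hc := fun u => sumV n (fun j => if adj u j then c u j * (V u - V j) else 0)).
  assert (Hbal : sumV K (fun k => Hc (x k)) = 0).
  { rewrite <- (reindex n x K Hc Hx Hinj).
    assert (Htot : sumV n Hc = 0).
    { unfold Hc. apply antisym_sum. intros u j. rewrite (Hsym j u), (Hcs j u). destruct (adj u j); ring. }
    rewrite <- Htot. apply sumV_ext. intros u Hu. fold Gm. destruct (Gm u) eqn:G; auto.
    unfold Hc. rewrite Hh' by auto. auto. }
  set (Z := fun k => sumV n (fun j => if adj (x k) j then c (x k) j * (V j - m) else 0)).
  assert (HZ : forall k, (k < K)%nat -> Hc (x k) = ctot n adj c (x k) * (p k - m) - Z k).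
  { intros k Hk. unfold Hc, Z, ctot. rewrite <- HVx by auto. rewrite (Rmult_comm (sumV n _)), <- sumV_scal, <- sumV_minus.
    apply sumV_ext. intros j _. destruct (adj (x k) j); ring. }
  assert (HZb : forall k, (k < K)%nat -> Rabs (Z k) <= beta * ctot n adj c (x k) + C2 * KR).
  { intros k Hk. unfold Z. eapply Rle_trans; [apply sumV_abs|].
    apply Rle_trans with (sumV n (fun j => beta * (if adj (x k) j then c (x k) j else 0) + C2 * (if Gm j then 1 else 0))).
    - apply sumV_le. intros j Hj. destruct (adj (x k) j) eqn:A.
      + rewrite Rabs_mult, (Rabs_pos_eq (c (x k) j)) by (apply Hcnn; auto).
        assert (Hcb' := Hcb _ _ A). destruct (Gm j) eqn:G.
        * assert (Hb0 : 0 <= beta) by (eapply Rle_trans; [apply Rabs_pos| apply (Hbeta i Hi)]; apply Bool.not_true_iff_false; intro E; apply HiG; apply HGm; auto).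
          specialize (Hg1 j Hj). assert (c (x k) j * Rabs (V j - m) <= C2 * 1) by (apply Rmult_le_compat; try lra; apply Rabs_pos). nra.
        * specialize (Hbeta j Hj G). assert (c (x k) j * Rabs (V j - m) <= c (x k) j * beta) by (apply Rmult_le_compat_l; lra). lra.
      + rewrite Rabs_R0. assert (0 <= beta).
        { eapply Rle_trans; [apply Rabs_pos| apply (Hbeta i Hi)]. apply Bool.not_true_iff_false. intro E. apply HiG. apply HGm; auto. }
        destruct (Gm j); lra.
    - rewrite sumV_plus, !sumV_scal, <- card_sum. fold (ctot n adj c (x k)).
      assert (C2 * INR (card n Gm) <= C2 * KR) by (apply Rmult_le_compat_l; lra). lra. }
  set (S1 := sumK K (fun k => p k * ctot n adj c (x k))).
  set (S2 := sumK K (fun k => ctot n adj c (x k))).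
  change (sumK K (fun k => p k * ctot n adj c (x k))) with S1.
  change (sumK K (fun k => ctot n adj c (x k))) with S2.
  assert (HS2 : C1 * delta * C * lam < S2).
  { unfold S2. change (sumK K ?f) with (sumV K f).
    apply Rlt_le_trans with (ctot n adj c (x 0%nat)); [apply Hct; auto|].
    apply (sumV_ge_term K (fun k => ctot n adj c (x k)) 0%nat); [|lia]. intros k Hk. left. apply Hctpos; auto. }
  assert (HS12 : S1 - m * S2 = sumV K Z).
  { unfold S1, S2. change (sumK K ?f) with (sumV K f).
    assert (E : sumV K (fun k => Hc (x k)) = sumV K (fun k => ctot n adj c (x k) * (p k - m) - Z k))
      by (apply sumV_ext; auto).
    rewrite Hbal, sumV_minus in E. rewrite <- sumV_scal, <- sumV_minus.
    transitivity (sumV K (fun k => ctot n adj c (x k) * (p k - m))); [apply sumV_ext; intros; ring| lra]. }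
  assert (HZsum : Rabs (sumV K Z) <= beta * S2 + C2 * KR * KR).
  { eapply Rle_trans; [apply sumV_abs|].
    apply Rle_trans with (sumV K (fun k => beta * ctot n adj c (x k) + C2 * KR)).
    - apply sumV_le. intros k Hk. apply HZb; auto.
    - rewrite sumV_plus, sumV_scal, sumV_const. unfold S2. change (sumK K ?f) with (sumV K f). fold KR. lra. }
  assert (HS2p : 0 < S2) by (assert (0 < C1 * delta * C * lam) by (repeat apply Rmult_lt_0_compat; lra); lra).
  assert (Hi1 : Rabs (V i - m) <= beta).
  { apply Hbeta; auto. apply Bool.not_true_iff_false. intro E. apply HiG. apply HGm; auto. }
  assert (Hma : Rabs (m - S1 / S2) <= beta + C2 * KR * KR / (C1 * delta * C * lam)).
  { replace (m - S1 / S2) with (- (sumV K Z) / S2) by (rewrite <- HS12; field; lra).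
    unfold Rdiv. rewrite Rabs_mult, Rabs_Ropp, (Rabs_pos_eq (/ S2)) by (left; apply Rinv_0_lt_compat; lra).
    apply Rle_trans with ((beta * S2 + C2 * KR * KR) * / S2).
    - apply Rmult_le_compat_r; [left; apply Rinv_0_lt_compat; lra| auto].
    - rewrite Rmult_plus_distr_r. replace (beta * S2 * / S2) with beta by (field; lra).
      apply Rplus_le_compat_l. apply Rmult_le_compat_l; [nra|].
      apply Rinv_le_contravar; [repeat apply Rmult_lt_0_compat; lra| lra]. }
  replace (V i - S1 / S2) with ((V i - m) + (m - S1 / S2)) by ring.
  eapply Rle_trans; [apply Rabs_triang|].
  apply Rle_trans with (beta + (beta + C2 * KR * KR / (C1 * delta * C * lam))); [lra|].
  right. unfold beta, M. field. repeat split; lra.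
Qed.
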